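(* Let $(M,S)$ be a covered map and $(M^*,\bar S)$ its dual covered map. If the mobile $B=\Psi_2(M,S)$ is $(H',\pi,\alpha')$ with root $i$, then the mobile $\Psi_2(M^*,\bar S)$ is (isomorphic to) the map $(H',\pi^{-1},\alpha')$ with root $o=\alpha'(i)$.
   Context: Permutations compose right to left. A map is $M=(H,\sigma,\alpha)$, $H$ finite, $\alpha$ fixed-point-free involution, $\sigma$ permutation, $\langle\sigma,\alpha\rangle$ transitive, root $r\in H$, up to root-preserving relabelling; $\phi=\sigma\alpha$; dual $M^*=(H,\phi,\alpha)$ with the same root. $\pi_{|S}$ is obtained from the cycles of $\pi$ by erasing elements not in $S$. A covered map is $(M,S)$ with $S$ stable by $\alpha$ and $(S,\sigma_{|S},\alpha_{|S})$ a connecting unicellular map ($\sigma_{|S},\alpha_{|S}$ transitive on $S$, $S$ meets every cycle of $\sigma$ — $S=\emptyset$ allowed if $\sigma$ has one cycle — and $\sigma_{|S}\alpha_{|S}$ cyclic); its dual is $(M^*,H\setminus S)$. The motion function $\theta(h)=\sigma\alpha(h)$ ($h\in S$), $\sigma(h)$ ($h\notin S$) is cyclic and defines the order $r\prec_S\theta(r)\prec_S\cdots$. $\Delta(M,S)=(M,(I,O))$ with $I=\{h\in S:\alpha(h)\prec_S h\}\cup\{h\notin S:h\prec_S\alpha(h)\}$, $O=H\setminus I$. Unfolding of an oriented map $(M,(I,O))$: new elements $i,o\notin H$, $H'=H\cup\{i,o\}$, $I'=I\cup\{i\}$, $O'=O\cup\{o\}$, $\alpha'$ extends $\alpha$ with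 $\alpha'(i)=o$; $\sigma'$ inserts $i$ just before $r$ in the cycle of $\sigma$ containing $r$ and fixes $o$; $\phi'$ inserts $o$ just before $r$ in the cycle of $\phi$ containing $r$ and fixes $i$; $\pi_\circ=\sigma'_{|I'}$, $\pi_\bullet=\phi'_{|O'}$ (extended by the identity), $\pi=\pi_\circ\pi_\bullet^{-1}$. The mobile is $\Lambda_2(M,(I,O))=(H',\pi,\alpha')$ rooted at $i$, and $\Psi_2=\Lambda_2\circ\Delta$. *)

(* Defs.v *)
From mathcomp Require Import all_boot all_fingroup.
Set Implicit Arguments. Unset Strict Implicit. Unset Printing Implicit Defensive.

(* pi_{|S}: for x in S, the first pi^k x (k >= 1) lying in S;
   extended by the identity outside S. *)
Definition restr (T : finType) (p : T -> T) (S : {set T}) (x : T) : T :=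
  if x \in S then
    iter (find (fun n => iter n.+1 p x \in S) (iota 0 #|T|)).+1 p x
  else x.

Section Maps.
Variable T : finType.

Definition is_map (s a : T -> T) : Prop :=
  [/\ forall h, a (a h) = h,
      forall h, a h != h &
      forall x y, connect [rel u v | (v == s u) || (v == a u)] x y].

Definition covered_map (s a : T -> T) (S : {set T}) : Prop :=
  [/\ forall h, (a h \in S) = (h \in S),
      forall x y, x \in S -> y \in S ->
        connect [rel u v | (v == restr s S u) || (v == restr a S u)] x y,
      (forall h, exists k, iter k s h \in S) \/
        (S = set0 /\ forall x y, fconnect s x y) &
      forall x y, x \in S -> y \in S ->
        fconnect (fun h => restr s S (restr a S h)) x y].

Definition motion (s a : T -> T) (S : {set T}) (h : T) : T :=
  if h \in S then s (a h) else s h.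

(* position in the order r <_S theta(r) <_S ... *)
Definition pos (s a : T -> T) (r : T) (S : {set T}) (h : T) : nat :=
  findex (motion s a S) r h.

Definition DeltaI (s a : T -> T) (r : T) (S : {set T}) : {set T} :=
  [set h | if h \in S then pos s a r S (a h) < pos s a r S h
           else pos s a r S h < pos s a r S (a h)].

(* Unfolding: H' = H + {i, o}, with i = inr true, o = inr false. *)
Local Notation H' := (T + bool)%type.
Definition iH : H' := inr true.
Definition oH : H' := inr false.

Definition alpha' (a : T -> T) (x : H') : H' :=
  match x with inl h => inl (a h) | inr b => inr (~~ b) end.

(* i inserted just before r in the sigma-cycle of r; o fixed *)
Definition sigma' (s : T -> T) (r : T) (x : H') : H' :=
  match x with
  | inl h => if s h == r then iH else inl (s h)
  | inr true => inl r
  | inr false => oH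
  end.

(* o inserted just before r in the phi-cycle of r (phi = sigma alpha); i fixed *)
Definition phi' (s a : T -> T) (r : T) (x : H') : H' :=
  match x with
  | inl h => if s (a h) == r then oH else inl (s (a h))
  | inr true => iH
  | inr false => inl r
  end.

Definition I' (I : {set T}) : {set H'} :=
  [set x | match x with inl h => h \in I | inr b => b end].

(* pi = pi_circ pi_bullet^{-1} of the mobile Lambda_2(M,(I,O)) *)
Definition Lambda2_pi (s a : T -> T) (r : T) (I : {set T}) : H' -> H' :=
  fun x => restr (sigma' s r) (I' I)
             (finv (restr (phi' s a r) (~: I' I)) x).

Definition Psi2_pi (s a : T -> T) (r : T) (S : {set T}) : H' -> H' :=
  Lambda2_pi s a r (DeltaI s a r S).

End Maps.

(* Main.v *)
Require Import Defs.
From mathcomp Require Import all_boot all_fingroup.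
Set Implicit Arguments. Unset Strict Implicit. Unset Printing Implicit Defensive.

Section R.
Variable T : finType.
Implicit Types (p : T -> T) (S : {set T}).

Lemma iter_inj p n : injective p -> injective (iter n p).
Proof. move=> Hp; elim: n => [|n IH] x y //= /Hp; exact: IH. Qed.

Lemma restr_spec p S z : injective p -> z \in S ->
  let n := find (fun n => iter n.+1 p z \in S) (iota 0 #|T|) in
  [/\ restr p S z = iter n.+1 p z, iter n.+1 p z \in S &
      forall j, j < n -> iter j.+1 p z \notin S].
Proof.
move=> Hp zS n.
have hasP : has (fun n => iter n.+1 p z \in S) (iota 0 #|T|).
  apply/hasP; exists (fingraph.order p z).-1.
    rewrite mem_iota /= add0n -ltnS (orderSpred p z) ltnS.
    exact: max_card.
  by rewrite orderSpred iter_order.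
have nlt : n < #|T| by rewrite -[X in _ < X](size_iota 0) -has_find.
split.
- by rewrite /restr zS.
- by have := nth_find 0 hasP; rewrite nth_iota.
- move=> j jn; have := before_find 0 jn; rewrite nth_iota ?add0n ?(ltn_trans jn) //.
  by move=> ->.
Qed.

Lemma restr_in p S z : injective p -> z \in S -> restr p S z \in S.
Proof. by move=> Hp zS; case: (restr_spec Hp zS) => -> . Qed.

Lemma restr_inj p S : injective p -> injective (restr p S).
Proof.
move=> Hp.
have key : forall x y, x \in S -> y \in S ->
  find (fun n => iter n.+1 p x \in S) (iota 0 #|T|) <=
  find (fun n => iter n.+1 p y \in S) (iota 0 #|T|) ->
  restr p S x = restr p S y -> x = y.
  move=> x y xS yS; case: (restr_spec Hp xS) => -> _ _.
  case: (restr_spec Hp yS) => -> _ Hy.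
  set nx := find _ _; set ny := find _ _ => le e.
  move: e; rewrite -(subnK le) -addnS addnC iterD => e.
  have ex := iter_inj Hp e; rewrite ex in xS *.
  case E: (ny - nx) xS => [|d] xS //.
  have dn : d < ny by rewrite -E leq_subr.
  by move: (Hy d dn); rewrite xS.
move=> x y; case xS: (x \in S); case yS: (y \in S).
- move=> e; case: (leqP (find (fun n => iter n.+1 p x \in S) (iota 0 #|T|))
                   (find (fun n => iter n.+1 p y \in S) (iota 0 #|T|))) => le.
    exact: key.
  by apply/esym/key => //; apply: ltnW.
- have := restr_in Hp xS; rewrite {3}/restr yS => h e; rewrite e in h.
  by rewrite h in yS.
- have := restr_in Hp yS; rewrite {2}/restr xS => h e; rewrite -e in h.
  by rewrite h in xS.
- by rewrite /restr xS yS.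
Qed.

Lemma iter_conj (U : finType) (f p q : U -> U) n x :
  (forall y, q (f y) = f (p y)) -> iter n q (f x) = f (iter n p x).
Proof. by move=> H; elim: n => //= n ->. Qed.

Lemma restr_conj (U : finType) (f p q : U -> U) (S1 S2 : {set U}) x :
  (forall y, (f y \in S2) = (y \in S1)) -> (forall y, q (f y) = f (p y)) ->
  restr q S2 (f x) = f (restr p S1 x).
Proof.
move=> HS Hq; rewrite /restr HS.
have -> : find (fun n => iter n.+1 q (f x) \in S2) (iota 0 #|U|) =
          find (fun n => iter n.+1 p x \in S1) (iota 0 #|U|).
  by apply: eq_find => n; rewrite (iter_conj _ _ Hq) HS.
by case: (x \in S1) => //; rewrite (iter_conj _ _ Hq).
Qed.

Lemma finv_conj (U : finType) (f p q : U -> U) x :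
  injective p -> injective q -> (forall y, q (f y) = f (p y)) ->
  finv q (f x) = f (finv p x).
Proof.
move=> Hp Hq H; apply: (Hq); by rewrite (f_finv Hq) H (f_finv Hp).
Qed.

Lemma finv_comp (U : finType) (A B : U -> U) y :
  injective A -> injective B -> finv (fun x => A (finv B x)) y = B (finv A y).
Proof.
move=> HA HB.
have Hg : injective (fun x => A (finv B x)).
  by move=> u v /HA /(can_inj (f_finv HB)).
have e : (fun x => A (finv B x)) (B (finv A y)) = y by rewrite /= (finv_f HB) (f_finv HA).
by rewrite -{1}e (finv_f Hg).
Qed.

Lemma restr_alpha (a : T -> T) S z : injective a ->
  (forall h, (a h \in S) = (h \in S)) -> z \in S -> restr a S z = a z.
Proof.
move=> Ha HS zS; case: (restr_spec Ha zS) => ->.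
case: (find _ _) => // n _ /(_ 0 isT) /=; by rewrite HS zS.
Qed.

Lemma motion_cyclic (s a : {perm T}) S r h :
  is_map s a -> covered_map s a S -> fconnect (motion s a S) r h.
Proof.
move=> [aK afix _] [HS _ Hcov Hcyc].
set th := motion s a S.
have thinj : injective th.
  move=> x y; rewrite /th /motion.
  case xS: (x \in S); case yS: (y \in S) => /perm_inj // e.
  - by rewrite -(aK x) e aK.
  - by move: xS; rewrite -HS e yS.
  - by move: yS; rewrite -HS -e xS.
case: Hcov => [Hk|[S0 Hs]]; last first.
  rewrite (@eq_fconnect _ _ s) ?Hs // => x; by rewrite /th /motion S0 in_set0.
have iterth : forall y k, (forall j, j < k -> iter j s y \notin S) ->
    iter k th y = iter k s y.
  move=> y; elim=> [//|k IH] Hj; rewrite iterS IH; last by move=> j jk; apply: Hj; apply: ltnW.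
  by rewrite /th /motion (negbTE (Hj k (ltnSn k))).
have reach : forall h, exists2 z, z \in S & fconnect th h z.
  move=> x; have [k kS kmin] := ex_minnP (Hk x).
  exists (iter k s x) => //; rewrite -iterth; first exact: fconnect_iter.
  move=> j jk; apply/negP => jS; have := kmin j jS; by rewrite leqNgt jk.
have step : forall z, z \in S -> fconnect th z (restr s S (restr a S z)).
  move=> z zS; rewrite (restr_alpha (@perm_inj _ a) HS zS).
  have azS : a z \in S by rewrite HS.
  case: (restr_spec (@perm_inj _ s) azS) => -> _ Hj.
  set n := find _ _ in Hj *.
  have e : iter n.+1 th z = iter n.+1 s (a z).
    rewrite iterSr {2}/th /motion zS iterth; first by rewrite -iterSr.
    by move=> j jn; rewrite -iterSr; apply: Hj.
  rewrite -e; exact: fconnect_iter.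
have allS : forall x y, x \in S -> y \in S -> fconnect th x y.
  move=> x y xS yS; have := Hcyc x y xS yS => /iter_findex <-.
  set F := fun h => restr s S (restr a S h).
  suff inv : forall n, iter n F x \in S /\ fconnect th x (iter n F x) by case: (inv (findex F x y)).
  elim=> [|n [nS IH]]; first by split=> //; exact: connect0.
  split; rewrite iterS.
    apply: restr_in; first exact: perm_inj.
    by rewrite (restr_alpha (@perm_inj _ a) HS nS) HS.
  exact: connect_trans IH (step _ nS).
have [zr zrS rzr] := reach r; have [zh zhS hzh] := reach h.
apply: connect_trans rzr _; apply: connect_trans (allS _ _ zrS zhS) _.
by rewrite fconnect_sym.
Qed.

Lemma sigma'_inj (s : T -> T) r : injective s -> injective (sigma' s r).
Proof.
move=> Hs [x|[]] [y|[]] //=; rewrite /iH /oH;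
  repeat case: ifP => /eqP; move=> *; subst; try congruence.
all: f_equal; apply: Hs; congruence.
Qed.

Definition swapb (U : Type) (x : U + bool) : U + bool :=
  match x with inl h => inl h | inr b => inr (~~ b) end.
Lemma swapbK (U : Type) : involutive (@swapb U).
Proof. by case=> //= b; rewrite negbK. Qed.

Lemma phi'_sigma' (s a : T -> T) r x :
  phi' s a r x = swapb (sigma' (fun h => s (a h)) r (swapb x)).
Proof. by case: x => [h|[]] //=; case: ifP. Qed.

Lemma phi'_inj (s a : T -> T) r : injective s -> injective a -> injective (phi' s a r).
Proof.
move=> Hs Ha x y; rewrite !phi'_sigma' => /(can_inj (@swapbK _)).
move/sigma'_inj => H; apply: (can_inj (@swapbK _)); apply: H.
by move=> u v /Hs /Ha.
Qed.
End R.

From Stdlib Require Import FunctionalExtensionality.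

Lemma motion_dual (T : finType) (s a : T -> T) (S : {set T}) :
  (forall h, a (a h) = h) -> motion (fun h => s (a h)) a (~: S) = motion s a S.
Proof.
move=> aK; apply: functional_extensionality => h.
by rewrite /motion in_setC; case: (h \in S) => //=; rewrite aK.
Qed.

Lemma delta_dual (T : finType) (s a : {perm T}) r S :
  is_map s a -> covered_map s a S ->
  DeltaI (fun h => s (a h)) a r (~: S) = ~: DeltaI s a r S.
Proof.
move=> Hm Hc; have [aK afix _] := Hm.
apply/setP => h; rewrite /DeltaI /pos motion_dual // !inE.
set P := findex (motion s a S) r.
have neq : P h != P (a h).
  apply/eqP => e; move/eqP: (afix h); apply.
  by rewrite -(iter_findex (motion_cyclic r (a h) Hm Hc)) -/P -e
             (iter_findex (motion_cyclic r h Hm Hc)).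
case: (h \in S) => /=.
  by rewrite -leqNgt ltn_neqAle neq.
by rewrite -leqNgt ltn_neqAle eq_sym neq.
Qed.

Theorem mainTheorem13 (T : finType) (sigma alpha : {perm T}) (r : T)
    (S : {set T}) :
  is_map sigma alpha ->
  covered_map sigma alpha S ->
  exists f : {perm (T + bool)},
    [/\ f (iH T) = oH T,
        forall x, f (alpha' alpha x) = alpha' alpha (f x) &
        forall x, f (Psi2_pi (fun h => sigma (alpha h)) alpha r (~: S) x)
                  = finv (Psi2_pi sigma alpha r S) (f x)].
Proof.
move=> Hm Hc; have [aK afix _] := Hm.
exists (perm (can_inj (@swapbK T))); split.
- by rewrite permE.
- by move=> [x|b]; rewrite !permE.
move=> x; rewrite !permE /Psi2_pi delta_dual // /Lambda2_pi.
set I := DeltaI sigma alpha r S.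
set A := restr (sigma' sigma r) (I' I).
set B := restr (phi' sigma alpha r) (~: I' I).
have sinj : injective sigma := @perm_inj _ sigma.
have ainj : injective alpha := @perm_inj _ alpha.
have Ainj : injective A by apply: restr_inj; apply: sigma'_inj.
have Binj : injective B by apply: restr_inj; apply: phi'_inj.
have Asinj : injective (restr (phi' (fun h => sigma (alpha h)) alpha r) (~: I' (~: I))).
  by apply: restr_inj; apply: phi'_inj => // u v /sinj /ainj.
have M1 : forall y, (swapb y \in I' (~: I)) = (y \in ~: I' I).
  by case=> [h|b]; rewrite /= !inE.
have M2 : forall y, (swapb y \in ~: I' (~: I)) = (y \in I' I).
  by move=> y; rewrite in_setC M1 in_setC negbK.
have EA : forall y, restr (phi' (fun h => sigma (alpha h)) alpha r) (~: I' (~: I)) (swapb y)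
                    = swapb (A y).
  move=> y; apply: restr_conj => // [[h|[]]] //=; rewrite aK; by case: ifP.
have EB : forall y, restr (sigma' (fun h => sigma (alpha h)) r) (I' (~: I)) (swapb y)
                    = swapb (B y).
  move=> y; apply: restr_conj => // [[h|[]]] //=; by case: ifP.
rewrite finv_comp // -{1}(swapbK x) (finv_conj _ Ainj Asinj EA) EB swapbK //.
Qed.
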